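(* Let $W$ be a weakly symmetric discrete memoryless channel with input alphabet $\mathbb{F}_q$, with uniformly distributed input. Let $x\in\mathbb{F}_q$ be the input symbol sent, let $y$ be the corresponding (random) output, and let $\pi=\pi_y$ be the APP vector. Then $$\mathbb{E}_y(\pi(x))=\mathbb{E}_y(\|\pi\|^2),\qquad\text{where }\|\pi\|^2=\sum_{\alpha\in\mathbb{F}_q}\pi(\alpha)^2.$$
   Context: A discrete memoryless channel with transition probabilities $W(y|x)$, $x\in\mathbb{F}_q$, $y\in\mathcal{Y}$ (finite), is weakly symmetric if $\mathcal{Y}$ admits a partition $Y_1\cup\dots\cup Y_r$ such that each submatrix $(W(y|x))_{x\in\mathbb{F}_q,y\in Y_i}$ has all its rows permutations of each other and all its columns permutations of each other. With uniform input, the APP vector of output $y$ is $\pi_y(\alpha)=\mathrm{prob}(x=\alpha\mid y)=W(y|\alpha)/\sum_\beta W(y|\beta)$. The expectation $\mathbb{E}_y$ is over $y$ distributed according to $W(\cdot|x)$. *)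

(* Defs.v *)
From HB Require Import structures.
From mathcomp Require Import all_boot all_order all_algebra all_field.
Set Implicit Arguments. Unset Strict Implicit. Unset Printing Implicit Defensive.
Import Order.TTheory GRing.Theory Num.Theory.
Local Open Scope ring_scope.

(* A DMC with input alphabet F (a finite field F_q), finite output alphabet Y,
   transition probabilities W x y = W(y|x), real values in a real field R. *)
Definition is_channel (R : realFieldType) (F : finFieldType) (Y : finType)
  (W : F -> Y -> R) : Prop :=
  (forall x y, 0 <= W x y) /\ (forall x, \sum_(y : Y) W x y = 1).

Definition weakly_symmetric (R : realFieldType) (F : finFieldType) (Y : finType)
  (W : F -> Y -> R) : Prop :=
  exists P : {set {set Y}}, partition P [set: Y] /\
    forall B, B \in P ->
      (forall x x' : F, perm_eq [seq W x y | y <- enum B] [seq W x' y | y <- enum B]) /\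
      (forall y y', y \in B -> y' \in B ->
         perm_eq [seq W a y | a <- enum F] [seq W a y' | a <- enum F]).

(* APP vector of output y under uniform input. *)
Definition app (R : realFieldType) (F : finFieldType) (Y : finType)
  (W : F -> Y -> R) (y : Y) (a : F) : R :=
  W a y / \sum_(b : F) W b y.

Definition Ey (R : realFieldType) (F : finFieldType) (Y : finType)
  (W : F -> Y -> R) (x : F) (f : Y -> R) : R :=
  \sum_(y : Y) W x y * f y.

(* Main.v *)
Require Import Defs.
From HB Require Import structures.
From mathcomp Require Import all_boot all_order all_algebra all_field.
From mathcomp Require Import ring lra.
Import Order.TTheory GRing.Theory Num.Theory.
Local Open Scope ring_scope.

Lemma sum_perm_fun (R : realFieldType) (T : finType) (A : {pred T}) (f g : T -> R) (h : R -> R) :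
  perm_eq [seq f y | y <- enum A] [seq g y | y <- enum A] ->
  \sum_(y in A) h (f y) = \sum_(y in A) h (g y).
Proof.
move=> pe; rewrite -!big_enum.
rewrite -(big_map f xpredT h) -(big_map g xpredT h).
exact: perm_big.
Qed.

Theorem lemma1 (R : realFieldType) (F : finFieldType) (Y : finType)
  (W : F -> Y -> R) (x : F) :
  is_channel W -> weakly_symmetric W ->
  Ey W x (fun y => app W y x) = Ey W x (fun y => \sum_(a : F) (app W y a) ^+ 2).
Proof.
move=> _ [P [partP hP]].
have /and3P [/eqP covP trivP set0P] := partP.
have eP : forall f : Y -> R, \sum_(y : Y) f y = \sum_(B in P) \sum_(y in B) f y.
  by move=> f; rewrite -big_trivIset // covP; apply: eq_bigl => y; rewrite inE.
rewrite /Ey !eP.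
apply: eq_bigr => B BP.
have [hrow hcol] := hP B BP.
have [y0 y0B] : exists y0, y0 \in B.
  case: (set_0Vmem B) => [B0|[z zB]]; [by move: set0P; rewrite -B0 BP | by exists z].
set S := \sum_(b : F) W b y0.
set Q := \sum_(a : F) W a y0 ^+ 2.
have colS : forall y, y \in B -> \sum_(b : F) W b y = S.
  move=> y yB; rewrite /S -!big_enum.
  have := @sum_perm_fun _ _ _ _ _ id (hcol y y0 yB y0B).
  by rewrite -!big_enum.
have colQ : forall y, y \in B -> \sum_(b : F) W b y ^+ 2 = Q.
  move=> y yB; rewrite /Q.
  have := @sum_perm_fun _ _ _ _ _ (fun v => v ^+ 2) (hcol y y0 yB y0B).
  by rewrite -!big_enum.
set T := \sum_(y in B) W x y.
set Rr := \sum_(y in B) W x y ^+ 2.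
have rowT : forall a, \sum_(y in B) W a y = T.
  by move=> a; apply: (@sum_perm_fun _ _ _ _ _ id (hrow a x)).
have rowR : forall a, \sum_(y in B) W a y ^+ 2 = Rr.
  by move=> a; apply: (@sum_perm_fun _ _ _ _ _ (fun v => v ^+ 2) (hrow a x)).
have hS : #|B|%:R * S = #|F|%:R * T.
  transitivity (\sum_(y in B) \sum_(b : F) W b y).
    by rewrite (eq_bigr (fun _ => S)) ?sumr_const ?mulr_natl // => y yB; rewrite colS.
  rewrite exchange_big (eq_bigr (fun _ => T)) /=; last by move=> a _; rewrite rowT.
  by rewrite sumr_const mulr_natl.
have hQ : #|B|%:R * Q = #|F|%:R * Rr.
  transitivity (\sum_(y in B) \sum_(b : F) W b y ^+ 2).
    by rewrite (eq_bigr (fun _ => Q)) ?sumr_const ?mulr_natl // => y yB; rewrite colQ.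
  rewrite exchange_big (eq_bigr (fun _ => Rr)) /=; last by move=> a _; rewrite rowR.
  by rewrite sumr_const mulr_natl.
rewrite /app.
transitivity (\sum_(y in B) W x y ^+ 2 / S).
  by apply: eq_bigr => y yB; rewrite colS // mulrA expr2.
transitivity (\sum_(y in B) W x y * (Q / S ^+ 2)).
  2: { apply: eq_bigr => y yB; congr (_ * _); rewrite colS //.
       under eq_bigr do rewrite expr_div_n.
       by rewrite -mulr_suml colQ. }
rewrite -mulr_suml -/Rr -mulr_suml -/T.
have nB : #|B|%:R != 0 :> R by rewrite pnatr_eq0 -lt0n; apply/card_gt0P; exists y0.
have nF : #|F|%:R != 0 :> R by rewrite pnatr_eq0 -lt0n; apply/card_gt0P; exists x.
have [S0|S0] := eqVneq S 0.
  by rewrite S0 expr0n /= !invr0 !mulr0.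
have eT : T = #|B|%:R * S / #|F|%:R by rewrite hS mulrC mulKf.
have eR : Rr = #|B|%:R * Q / #|F|%:R by rewrite hQ mulrC mulKf.
rewrite eT eR; field.
by rewrite S0 nF.
Qed.
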